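(* For any digraph $G$, $1+\mathrm{cr}(G)\ge\mathrm{lifo}_{\mathtt{mi}}(G)$.
   Context: All digraphs are finite, simple, without self-loops and have at least one vertex (induced subgraphs appearing as game data may be empty). For a finite set $V$, $V^*$ is the set of finite words over $V$, $\epsilon$ the empty word; $X \preceq Y$ means $X$ is a prefix of $Y$; for $X=a_1\cdots a_n$, $|X|=n$ and $\mathrm{let}(X)=\{a_1,\dots,a_n\}$. $A\Delta B$ is symmetric difference. For $X\subseteq V(G)$, $G\setminus X$ is the subgraph induced by $V(G)\setminus X$. Induced subgraphs are identified with their vertex sets. A subgraph $H\subseteq G$ is successor-closed if there is no edge of $G$ from $H$ to $G\setminus H$. Cycle-rank $\mathrm{cr}(G)$: $0$ if $G$ is acyclic; $1+\min_{v\in V(G)}\mathrm{cr}(G\setminus\{v\})$ if $G$ is strongly connected (and not acyclic); otherwise the maximum of $\mathrm{cr}(H)$ over strongly connected components $H$ of $G$. A position is a pair $(X,R)$ with $X\in V(G)^*$ and $R$ a (possibly empty) induced subgraph of $G\setminus\mathrm{let}(X)$; it is an $\mathtt{i}$-position if $R$ is successor-closed. An $\mathtt{i}$-position $(X',R')$ is an $\mathtt{i}$-successor of $(X,R)$ if ($X\preceq X'$ or $X'\preceq X$), $|\mathrm{let}(X)\Delta\mathrm{let}(X')|=1$, and every $v'\in R'$ is reachable by a directed path in $G\setminus(\mathrm{let}(X)\cap\mathrm{let}(X'))$ from some $v\in R$. An $\mathtt{i}$-search from $(X_0,R_0)$ is a finite or infinite sequence of $\mathtt{i}$-positions with each $(X_{i+1},R_{i+1})$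 an $\mathtt{i}$-successor of $(X_i,R_i)$; it is complete if it is infinite or $R_n=\emptyset$ for some $n$, and a complete search is winning for the searchers if $R_n=\emptyset$ for some $n$. A complete search from $(\epsilon,G)$ is monotone if $R_{i+1}\subseteq R_i$ for all $i$, and uses at most $k$ searchers if $|X_i|\le k$ for all $i$. An $\mathtt{i}$-strategy is a function $\sigma$ from $\mathtt{i}$-positions to $V(G)^*$ such that $\sigma(X,R)$ is the first component of some $\mathtt{i}$-successor of $(X,R)$; a search is consistent with $\sigma$ if $X_{i+1}=\sigma(X_i,R_i)$ for all $i$. $\sigma$ is winning if every complete consistent search from $(\epsilon,G)$ is winning for the searchers; it is monotone / uses at most $k$ searchers if every complete consistent search from $(\epsilon,G)$ has that property. $\mathrm{lifo}_{\mathtt{mi}}(G)$ is the minimum $k$ such that there is a monotone winning $\mathtt{i}$-strategy using at most $k$ searchers. *)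

(* Defs.v *)
From mathcomp Require Import all_boot.
Set Implicit Arguments.
Unset Strict Implicit.
Unset Printing Implicit Defensive.

(* A digraph is a finite vertex type [T] with an edge relation [e : rel T]
   (simple: at most one edge per ordered pair; no self-loops is a hypothesis
   [irreflexive e] of the theorem). *)
Section Digraph.
Variables (T : finType) (e : rel T).

Definition within (S : {set T}) : rel T :=
  [rel x y | [&& e x y, x \in S & y \in S]].

Definition reach_in (S : {set T}) (x y : T) : bool :=
  [&& x \in S, y \in S & connect (within S) x y].

Definition acyclic_in (S : {set T}) : bool :=
  ~~ [exists x in S, exists y in S, e x y && reach_in S y x].

Definition strongly_connected_in (S : {set T}) : bool :=
  (S != set0) && [forall x in S, forall y in S, reach_in S x y].

Definition scc_in (S : {set T}) (x : T) : {set T} :=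
  [set y in S | reach_in S x y && reach_in S y x].

Definition sccs_in (S : {set T}) : {set {set T}} := [set scc_in S x | x in S].

(* Structural recursion with fuel; with fuel n.+1 the argument has at most n
   vertices, and recursive calls are on sets with strictly fewer vertices.
   In the strongly connected branch S is nonempty, so the unit #|T| of the
   minimum is never used. *)
Fixpoint cr_fuel (n : nat) (S : {set T}) : nat :=
  match n with
  | 0 => 0
  | n'.+1 =>
    if acyclic_in S then 0
    else if strongly_connected_in S then
      (\big[minn/#|T|]_(v in S) cr_fuel n' (S :\ v)).+1
    else \max_(H in sccs_in S) cr_fuel n' H
  end.

Definition cr_of (S : {set T}) : nat := cr_fuel #|T|.+1 S.

Definition cycle_rank : nat := cr_of [set: T].

Definition letters (X : seq T) : {set T} := [set x in X].

Definition succ_closed_in (A R : {set T}) : bool :=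
  [forall x in R, forall y, (e x y && (y \in A)) ==> (y \in R)].

Definition position := (seq T * {set T})%type.

Definition ipos (p : position) : bool :=
  (p.2 \subset ~: letters p.1) && succ_closed_in (~: letters p.1) p.2.

Definition symdiff (A B : {set T}) : {set T} := (A :\: B) :|: (B :\: A).

Definition isucc (p q : position) : bool :=
  [&& ipos q,
      prefix p.1 q.1 || prefix q.1 p.1,
      #|symdiff (letters p.1) (letters q.1)| == 1 &
      [forall v' in q.2, exists v in p.2,
          reach_in (~: (letters p.1 :&: letters q.1)) v v']].

(* A search is a map s : nat -> position, together with its length:
   N = None for an infinite search, N = Some n for the finite search
   s 0, ..., s n. *)
Definition in_range (N : option nat) (i : nat) : bool :=
  if N is Some n then i <= n else true.

Definition isearch (s : nat -> position) (N : option nat) : Prop :=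
  (forall i, in_range N i -> ipos (s i)) /\
  (forall i, in_range N i.+1 -> isucc (s i) (s i.+1)).

Definition complete (s : nat -> position) (N : option nat) : Prop :=
  N = None \/ exists2 n, in_range N n & (s n).2 = set0.

Definition winning_search (s : nat -> position) (N : option nat) : Prop :=
  exists2 n, in_range N n & (s n).2 = set0.

Definition monotone_search (s : nat -> position) (N : option nat) : Prop :=
  forall i, in_range N i.+1 -> (s i.+1).2 \subset (s i).2.

Definition uses_at_most (k : nat) (s : nat -> position) (N : option nat) : Prop :=
  forall i, in_range N i -> size (s i).1 <= k.

Definition start : position := ([::], [set: T]).

(* i-strategy: on each i-position, prescribes the first component of some
   i-successor (values on non-i-positions are irrelevant) *)
Definition istrategy (sigma : position -> seq T) : Prop :=
  forall p, ipos p -> exists R', isucc p (sigma p, R').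

Definition consistent (sigma : position -> seq T) (s : nat -> position)
  (N : option nat) : Prop :=
  forall i, in_range N i.+1 -> (s i.+1).1 = sigma (s i).

Definition mono_win_strategy (k : nat) (sigma : position -> seq T) : Prop :=
  istrategy sigma /\
  forall (s : nat -> position) (N : option nat),
    s 0 = start -> isearch s N -> complete s N -> consistent sigma s N ->
    [/\ winning_search s N, monotone_search s N & uses_at_most k s N].

Definition lifo_mi_le (k : nat) : Prop :=
  exists sigma : position -> seq T, mono_win_strategy k sigma.

End Digraph.

(* Main.v *)
Require Import Defs.
From mathcomp Require Import all_boot zify.
Set Implicit Arguments.
Unset Strict Implicit.
Unset Printing Implicit Defensive.
Section G.
Variables (T : finType) (e : rel T).
Implicit Types (S A B R D : {set T}) (x y z a b c d : T).

Lemma within_sub S S' : S \subset S' -> subrel (within e S) (within e S').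
Proof. move=> sS x y; rewrite /within /= => /and3P[-> xS yS]. by rewrite (subsetP sS _ xS) (subsetP sS _ yS). Qed.

Lemma reach_mono S S' x y : S \subset S' -> reach_in e S x y -> reach_in e S' x y.
Proof.
move=> sS /and3P[xS yS c]; rewrite /reach_in (subsetP sS _ xS) (subsetP sS _ yS) /=.
apply: connect_sub c => u v h; apply: connect1; exact: within_sub h.
Qed.

Lemma reach_refl S x : x \in S -> reach_in e S x x.
Proof. by move=> xS; rewrite /reach_in xS connect0. Qed.

Lemma reach_trans S x y z : reach_in e S x y -> reach_in e S y z -> reach_in e S x z.
Proof.
move=> /and3P[xS _ c1] /and3P[_ zS c2]; rewrite /reach_in xS zS /=; exact: connect_trans c1 c2.
Qed.

Lemma reach_edge S x y : x \in S -> y \in S -> e x y -> reach_in e S x y.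
Proof. move=> xS yS exy; rewrite /reach_in xS yS /=; apply: connect1; by rewrite /within /= exy xS yS. Qed.

Lemma in_scc A x y : (y \in scc_in e A x) = [&& y \in A, reach_in e A x y & reach_in e A y x].
Proof. by rewrite inE. Qed.

Lemma scc_sub A x : scc_in e A x \subset A.
Proof. by apply/subsetP=> y; rewrite in_scc => /andP[]. Qed.

Lemma scc_self A x : x \in A -> x \in scc_in e A x.
Proof. by move=> xA; rewrite in_scc xA reach_refl. Qed.

Lemma scc_eq A x y : y \in scc_in e A x -> scc_in e A y = scc_in e A x.
Proof.
rewrite in_scc => /and3P[yA rxy ryx]; apply/setP=> z; rewrite !in_scc.
apply/and3P/and3P => -[zA r1 r2]; split => //.
- exact: reach_trans rxy r1.
- exact: reach_trans r2 ryx.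
- exact: reach_trans ryx r1.
- exact: reach_trans r2 rxy.
Qed.

Lemma scc_reach A x a b : a \in scc_in e A x -> b \in scc_in e A x ->
  reach_in e A a b -> reach_in e (scc_in e A x) a b.
Proof.
move=> aD bD /and3P[_ _ /connectP[p pth eb]]; move: bD; rewrite eb {eb b}.
elim: p a aD pth => [|c p IH] a aD /=; first by move=> _ _; exact: reach_refl.
move=> /andP[wac pth] bD.
have cA : c \in A by case/and3P: wac.
have rcb : reach_in e A c (last c p).
  by rewrite /reach_in cA (subsetP (scc_sub A x) _ bD); apply/connectP; exists p.
move: (aD) (bD); rewrite !in_scc => /and3P[aA rxa rax] /and3P[_ rxb rbx].
have cD : c \in scc_in e A x.
  rewrite in_scc cA (reach_trans rcb rbx) andbT.
  apply: reach_trans rxa _; case/and3P: wac => eac _ _; exact: reach_edge.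
apply: reach_trans (IH c cD pth bD).
by case/and3P: wac => eac _ _; exact: reach_edge.
Qed.

Lemma scc_sc A x : x \in A -> strongly_connected_in e (scc_in e A x).
Proof.
move=> xA; apply/andP; split; first by apply/set0Pn; exists x; exact: scc_self.
apply/forall_inP=> y yD; apply/forall_inP=> z zD; apply: scc_reach => //.
move: yD zD; rewrite !in_scc => /and3P[_ _ ryx] /and3P[_ rxz _].
exact: reach_trans ryx rxz.
Qed.

Lemma sc_scc A x : strongly_connected_in e A -> x \in A -> scc_in e A x = A.
Proof.
move=> /andP[_ /forall_inP H] xA; apply/setP=> y; rewrite in_scc.
case yA: (y \in A) => //=.
by rewrite (forall_inP (H x xA) y yA) (forall_inP (H y yA) x xA).
Qed.

Lemma acyclic_sub D A : D \subset A -> acyclic_in e A -> acyclic_in e D.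
Proof.
move=> sDA /existsPn H; apply/existsPn => x; apply/negP => /andP[xD /existsP[y /and3P[yD exy r]]].
move: (H x); rewrite (subsetP sDA _ xD) /=; move/existsPn => /(_ y).
by rewrite (subsetP sDA _ yD) exy (reach_mono sDA r).
Qed.

Lemma scc_acyclic A x : x \in A -> acyclic_in e (scc_in e A x) -> scc_in e A x = [set x].
Proof.
move=> xA ac; apply/setP=> y; rewrite inE; apply/idP/eqP; last first.
  by move=> ->; exact: scc_self.
move=> yD; apply/eqP; apply/negPn/negP => nyx.
have xD := scc_self xA.
have := scc_reach yD xD; rewrite in_scc in yD; case/and3P: yD => yA _ ryx.
move=> /(_ ryx) /and3P[yD' _ /connectP[p pth lst]].
case: p pth lst => [|z p] /=; first by move=> _ eq; rewrite eq eqxx in nyx.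
move=> /andP[/and3P[eyz _ zD] pth] lst.
move/existsPn: ac => /(_ y); rewrite yD' /=; move/existsPn => /(_ z).
rewrite zD eyz /=; apply/negP/negPn.
apply: (@reach_trans _ _ x); last first.
  apply: scc_reach => //.
  by move: (yD'); rewrite in_scc => /and3P[_ r _].
by rewrite /reach_in zD xD /=; apply/connectP; exists p.
Qed.

Lemma closed_reach B R A d y : succ_closed_in e B R -> A \subset B -> d \in R ->
  reach_in e A d y -> y \in R.
Proof.
move=> /forall_inP cl sAB dR /and3P[_ _ /connectP[p pth ->]].
elim: p d dR pth => [|c p IH] d dR //= /andP[/and3P[edc _ cA] pth].
apply: IH pth; move/forallP: (cl d dR) => /(_ c) /implyP; apply.
by rewrite edc (subsetP sAB _ cA).
Qed.


Lemma bigmin_leq (I : finType) (P : pred I) (F : I -> nat) k i :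
  P i -> \big[minn/k]_(j | P j) F j <= F i.
Proof.
move=> Pi; rewrite unlock /=.
have := mem_index_enum i.
elim: (index_enum I) => [|a r IH] //= ; rewrite inE => /orP[/eqP<-|ir].
  by rewrite Pi geq_minl.
case: (P a); last exact: IH.
exact: leq_trans (geq_minr _ _) (IH ir).
Qed.

Lemma bigmin_geq (I : finType) (P : pred I) (F : I -> nat) k m :
  m <= k -> (forall i, P i -> m <= F i) -> m <= \big[minn/k]_(j | P j) F j.
Proof.
move=> mk H; elim/big_ind: _ => //.
by move=> x y hx hy; rewrite leq_min hx hy.
Qed.

Lemma scc_in_sccs S H : H \in sccs_in e S -> exists2 x, x \in S & H = scc_in e S x.
Proof. by case/imsetP=> x xS ->; exists x. Qed.

Lemma scc_proper S x : x \in S -> ~~ strongly_connected_in e S -> #|scc_in e S x| < #|S|.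
Proof.
move=> xS nsc; apply: proper_card; rewrite properEneq scc_sub andbT.
apply/eqP=> eq; by rewrite -eq scc_sc in nsc.
Qed.

Lemma crF n m S : #|S| < n -> #|S| < m -> cr_fuel e n S = cr_fuel e m S.
Proof.
elim: n m S => [|n IH] [|m] S //= hn hm.
case: ifP => // _; case: ifP => sc.
  congr (_.+1); apply: eq_bigr => v vS; apply: IH.
    by move: hn; rewrite (cardsD1 v S) vS.
  by move: hm; rewrite (cardsD1 v S) vS.
apply: eq_bigr => H /scc_in_sccs[x xS ->].
have := scc_proper xS (negbT sc); move=> lt.
apply: IH; [exact: leq_trans lt hn | exact: leq_trans lt hm].
Qed.

Lemma cr_card n S : cr_fuel e n S <= #|S|.
Proof.
elim: n S => [|n IH] S //=.
case: ifP => // _; case: ifP => sc.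
  case/andP: sc => /set0Pn[v vS] _.
  apply: leq_ltn_trans (@bigmin_leq _ _ _ _ v vS) _.
  apply: leq_ltn_trans (IH _) _; by rewrite (cardsD1 v S) vS.
apply/bigmax_leqP => H /scc_in_sccs[x xS ->].
apply: leq_trans (IH _) _; exact: subset_leq_card (scc_sub _ _).
Qed.

Lemma cr_ofE n S : #|S| < n -> cr_fuel e n S = cr_of e S.
Proof. by move=> h; apply: crF => //; rewrite ltnS max_card. Qed.

Lemma cr_scc_le A x : x \in A -> cr_of e (scc_in e A x) <= cr_of e A.
Proof.
move=> xA.
case acA: (acyclic_in e A).
  by rewrite /cr_of /= (acyclic_sub (scc_sub A x) acA) acA.
case scA: (strongly_connected_in e A).
  by rewrite (sc_scc scA xA).
rewrite {2}/cr_of /= acA scA.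
rewrite -(@cr_ofE #|T|); last exact: leq_trans (scc_proper xA (negbT scA)) (max_card _).
apply: (@leq_bigmax_cond _ _ (fun H => cr_fuel e #|T| H)).
by apply/imsetP; exists x.
Qed.

Lemma cr_sc D x : strongly_connected_in e D -> ~~ acyclic_in e D -> x \in D ->
  (forall v, v \in D -> cr_of e (D :\ x) <= cr_of e (D :\ v)) ->
  cr_of e D = (cr_of e (D :\ x)).+1.
Proof.
move=> sc ac xD mn.
transitivity ((\big[minn/#|T|]_(v in D) cr_fuel e #|T| (D :\ v)).+1).
  by rewrite /cr_of /= (negbTE ac) sc.
have E v : v \in D -> cr_fuel e #|T| (D :\ v) = cr_of e (D :\ v).
  move=> vD; apply: cr_ofE; apply: leq_trans (max_card D).
  by rewrite (cardsD1 v D) vD.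
congr (_.+1); apply/eqP; rewrite eqn_leq; apply/andP; split.
  by rewrite -E // bigmin_leq.
apply: bigmin_geq.
  by apply: leq_trans (cr_card _ _) _; apply: max_card.
by move=> v vD; rewrite E //; exact: mn.
Qed.

Lemma acyclic0 : acyclic_in e set0.
Proof. by apply/existsPn => x; rewrite inE. Qed.

Definition fval S := cr_of e S + (S != set0).

Lemma fval_dec A x : x \in A ->
  (forall v, v \in scc_in e A x -> cr_of e (scc_in e A x :\ x) <= cr_of e (scc_in e A x :\ v)) ->
  fval (scc_in e A x :\ x) < fval A.
Proof.
move=> xA mn; rewrite /fval.
have A0 : A != set0 by apply/set0Pn; exists x.
rewrite A0 addn1 ltnS.
have le := cr_scc_le xA.
case: (boolP (acyclic_in e (scc_in e A x))) => ac.
  by rewrite (scc_acyclic xA ac) setDv eqxx addn0 /cr_of /= acyclic0.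
rewrite (cr_sc (scc_sc xA) ac (scc_self xA) mn) in le.
apply: leq_trans le; rewrite addnC; case: (_ != _) => //; exact: leqnSn.
Qed.

End G.
Section S.
Variables (T : finType) (e : rel T) (t0 : T).
Implicit Types (S A B R D L : {set T}) (X Y : seq T).

Definition ctx X : {set T} := foldl (fun A x => scc_in e A x :\ x) [set: T] X.

Lemma ctx_rcons X x : ctx (rcons X x) = scc_in e (ctx X) x :\ x.
Proof. by rewrite /ctx foldl_rcons. Qed.

Lemma in_letters X z : (z \in letters X) = (z \in X).
Proof. by rewrite inE. Qed.

Lemma letters_rcons X x : letters (rcons X x) = x |: letters X.
Proof. by apply/setP=> z; rewrite in_setU1 !in_letters mem_rcons in_cons. Qed.

Lemma letters_nil : letters ([::] : seq T) = set0.
Proof. by apply/setP=> z; rewrite !inE. Qed.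

Lemma ctx_disj X z : z \in letters X -> z \notin ctx X.
Proof.
elim/last_ind: X => [|X x IH]; first by rewrite letters_nil inE.
rewrite letters_rcons ctx_rcons in_setU1 in_setD1 => /orP[/eqP->|zX]; first by rewrite eqxx.
apply/negP=> /andP[_ zD]; have := subsetP (scc_sub e _ _) _ zD; by rewrite (negbTE (IH zX)).
Qed.

Lemma ctx_sub_compl X : ctx X \subset ~: letters X.
Proof. apply/subsetP => z zA; rewrite in_setC; apply/negP => /ctx_disj; by rewrite zA. Qed.

Lemma prefix_rcons_eq s X x : prefix s (rcons X x) = prefix s X || (s == rcons X x).
Proof.
elim: X s => [|y X IH] [|z s] //=.
by rewrite IH eqseq_cons andb_orr.
Qed.

Lemma take_rcons_size Y y : take (size Y) (rcons Y y) = Y.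
Proof. by rewrite -cats1 take_size_cat. Qed.

Lemma symdiffC L M : symdiff L M = symdiff M L.
Proof. by rewrite /symdiff setUC. Qed.

Lemma symdiff_add L v : v \notin L -> symdiff L (v |: L) = [set v].
Proof.
move=> vL; apply/setP=> w; rewrite /symdiff !inE.
case: (w =P v) => [->|_] /=; first by rewrite (negbTE vL).
by case: (w \in L).
Qed.

Definition valid X Y := (prefix X Y || prefix Y X) && (#|symdiff (letters X) (letters Y)| == 1).

Lemma valid_push X x : x \notin letters X -> valid X (rcons X x).
Proof. by move=> xL; rewrite /valid prefix_rcons letters_rcons symdiff_add // cards1. Qed.

Lemma valid_pop Y y : y \notin Y -> valid (rcons Y y) Y.
Proof.
move=> yY; rewrite /valid prefix_rcons orbT letters_rcons symdiffC symdiff_add ?cards1 //.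
by rewrite in_letters.
Qed.

Lemma pop_exists X : X != [::] ->
  exists i : 'I_(size X), #|symdiff (letters X) (letters (take i X))| == 1.
Proof.
elim/last_ind: X => [|Y y IH] // _.
have lt : size Y < size (rcons Y y) by rewrite size_rcons.
case yY: (y \in Y).
  have Y0 : Y != [::] by case: Y yY IH lt.
  case: (IH Y0) => i hi.
  have li : i < size (rcons Y y) by apply: ltn_trans (ltn_ord i) lt.
  exists (Ordinal li) => /=.
  have -> : letters (rcons Y y) = letters Y.
    by apply/setP=> z; rewrite !in_letters mem_rcons inE; case: (z =P y) => // ->.
  by rewrite -cats1 takel_cat // ltnW.
exists (Ordinal lt) => /=; rewrite take_rcons_size letters_rcons symdiffC symdiff_add ?cards1 //.
by rewrite in_letters yY.
Qed.

Definition fallback X : seq T :=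
  if [pick v | v \notin letters X] is Some v then rcons X v
  else if [pick i : 'I_(size X) | #|symdiff (letters X) (letters (take i X))| == 1] is Some i
       then take i X else X.

Lemma fallback_valid X : valid X (fallback X).
Proof.
rewrite /fallback; case: pickP => [v vX|none]; first exact: valid_push.
have X0 : X != [::].
  by apply/eqP => X0; move: (none t0); rewrite X0 letters_nil inE.
case: pickP => [i hi|none2].
  by rewrite /valid prefix_take orbT hi.
by case: (pop_exists X0) => i hi; move: (none2 i); rewrite hi.
Qed.


Definition predset A d := [set u in A | reach_in e A u d].
Definition src A R d0 := [arg min_(d < d0 in A :&: R) #|predset A d|].
Definition bestv D d0 := [arg min_(v < d0 in D) cr_of e (D :\ v)].
Definition dsel X R := if [pick d in ctx X :&: R] is Some d0 then src (ctx X) R d0 else t0.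
Definition pushv X R := let d := dsel X R in bestv (scc_in e (ctx X) d) d.
Definition mainmove (p : position T) : seq T :=
  if ([pick d in ctx p.1 :&: p.2] != None) || (p.1 == [::])
  then rcons p.1 (pushv p.1 p.2) else take (size p.1).-1 p.1.
Definition sigma (p : position T) : seq T :=
  if valid p.1 (mainmove p) then mainmove p else fallback p.1.

Lemma sigma_valid p : valid p.1 (sigma p).
Proof. rewrite /sigma; case: ifP => // _; exact: fallback_valid. Qed.

Lemma srcP A R d0 : d0 \in A :&: R ->
  src A R d0 \in A :&: R /\
  (forall u w, u \in A :&: R -> w \in scc_in e A (src A R d0) -> e u w ->
     u \in scc_in e A (src A R d0)).
Proof.
move=> d0AR; rewrite /src; case: arg_minnP => // d dAR mn; split => // u w uAR wD euw.
apply/negP => nuD.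
have uA : u \in A by case/setIP: uAR.
have dA : d \in A by case/setIP: dAR.
move: (wD); rewrite in_scc => /and3P[wA rdw rwd].
have rud : reach_in e A u d := reach_trans (reach_edge uA wA euw) rwd.
have lt : #|predset A u| < #|predset A d|.
  apply: proper_card; apply/properP; split.
    apply/subsetP => z; rewrite !inE => /andP[zA rzu]; rewrite zA /=.
    exact: reach_trans rzu rud.
  exists d; first by rewrite inE dA reach_refl.
  rewrite inE dA /=; apply/negP => rdu; apply: nuD.
  by rewrite in_scc uA rdu rud.
by have := mn u uAR; rewrite leqNgt lt.
Qed.

Lemma bestvP D d0 : d0 \in D ->
  bestv D d0 \in D /\ (forall v, v \in D -> cr_of e (D :\ bestv D d0) <= cr_of e (D :\ v)).
Proof. by move=> d0D; rewrite /bestv; case: arg_minnP. Qed.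

Definition Inv (p : position T) : Prop :=
 [/\ uniq p.1,
  forall Y y, prefix (rcons Y y) p.1 -> y \in ctx Y /\
     (forall u w, u \in p.2 -> w \in scc_in e (ctx Y) y -> e u w -> u \in scc_in e (ctx Y) y) &
  forall Y, prefix Y p.1 -> fval e (ctx Y) + size Y <= (cycle_rank e).+1].

Definition mu (p : position T) := #|p.2| * #|T|.+1 + size p.1.

Lemma succ_sub X X' R R' :
  succ_closed_in e (~: (letters X :&: letters X')) R -> isucc e (X, R) (X', R') -> R' \subset R.
Proof.
move=> cl /and4P[_ _ _ /forall_inP H]; apply/subsetP => v' v'R'.
case/existsP: (H v' v'R') => v /andP[vR r].
exact: closed_reach cl (subxx _) vR r.
Qed.

Lemma inv_ctx X R u w : Inv (X, R) -> ipos e (X, R) -> u \in R -> w \in ctx X -> e u w ->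
  u \in ctx X.
Proof.
case/lastP: X => [|Y y]; first by rewrite inE.
case=> _ I2 _ /andP[RL _] uR wA euw.
have [yc edge] := I2 Y y (prefix_refl _).
move: wA; rewrite ctx_rcons in_setD1 => /andP[_ wD].
have uD := edge u w uR wD euw.
rewrite in_setD1 uD andbT; apply/eqP => uy.
by move: (subsetP RL u uR); rewrite in_setC letters_rcons in_setU1 uy eqxx.
Qed.

Lemma push_step X R R' d : Inv (X, R) -> ipos e (X, R) -> d \in ctx X ->
  (forall u w, u \in R -> u \in ctx X -> w \in scc_in e (ctx X) d -> e u w ->
     u \in scc_in e (ctx X) d) ->
  (R != set0 -> d \in R) ->
  isucc e (X, R) (rcons X (bestv (scc_in e (ctx X) d) d), R') ->
  [/\ Inv (rcons X (bestv (scc_in e (ctx X) d) d), R'), R' \subset R &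
     (R != set0 -> mu (rcons X (bestv (scc_in e (ctx X) d) d), R') < mu (X, R))].
Proof.
move=> I ip dA hsrc hdR hs.
set A := ctx X in dA hsrc hs *; set D := scc_in e A d in hsrc hs *.
set x := bestv D d in hs *.
have [xD xmin] := bestvP (scc_self e dA).
have xA : x \in A := subsetP (scc_sub e A d) x xD.
have xL : x \notin letters X by apply/negP => /ctx_disj; rewrite xA.
have Dx : scc_in e A x = D := scc_eq xD.
case/andP: (ip) => RL Rcl.
have R'R : R' \subset R.
  apply: succ_sub hs; by rewrite letters_rcons (setIidPl (subsetUr _ _)).
case: I => I1 I2 I3.
split => //.
- split.
  + by rewrite rcons_uniq I1 andbT -in_letters.
  + move=> Y y; rewrite prefix_rcons_eq => /orP[pre|/eqP eq].
      have [yc edge] := I2 Y y pre; split => // u w uR'; apply: edge.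
      exact: subsetP R'R u uR'.
    case: (rcons_inj eq) => -> ->; split => // u w uR' wD euw.
    rewrite Dx in wD *.
    have uR := subsetP R'R u uR'.
    have wA : w \in A := subsetP (scc_sub e A d) w wD.
    exact: (hsrc u w uR (inv_ctx (And3 I1 I2 I3) ip uR wA euw) wD euw).
  + move=> Y; rewrite prefix_rcons_eq => /orP[pre|/eqP->]; first exact: I3.
    rewrite ctx_rcons size_rcons.
    have : fval e (scc_in e A x :\ x) < fval e A by apply: fval_dec xA _; rewrite Dx.
    have := I3 X (prefix_refl X).
    rewrite -/A => h3 hf; rewrite addnS; apply: leq_trans h3.
    by rewrite -addSn leq_add2r.
- move=> R0; have dR := hdR R0.
  have xR : x \in R.
    apply: closed_reach Rcl (ctx_sub_compl X) dR _.
    by move: xD; rewrite in_scc => /and3P[].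
  case/and4P: hs => /andP[RL' _] _ _ _.
  have xR' : x \notin R'.
    apply/negP => /(subsetP RL'); by rewrite in_setC letters_rcons in_setU1 eqxx.
  have ltR : #|R'| < #|R|.
    apply: proper_card; apply/properP; split => //; by exists x.
  have uq : uniq (rcons X x) by rewrite rcons_uniq I1 andbT -in_letters.
  have szT : size (rcons X x) <= #|T|.
    by rewrite -(card_uniqP uq) max_card.
  rewrite /mu /= size_rcons in szT *.
  have h1 : #|R'|.+1 * #|T|.+1 <= #|R| * #|T|.+1 := leq_mul ltR (leqnn _).
  rewrite mulSn in h1; move: h1 szT.
  move: (#|R'| * #|T|.+1) (#|R| * #|T|.+1) => a b h1 szT.
  apply: leq_ltn_trans (_ : a + (size X).+1 <= a + #|T|) _; first by rewrite leq_add2l.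
  apply: leq_trans (_ : _ <= b) (leq_addr _ _).
  by rewrite addnC -addSn.
Qed.

Lemma pop_step Y y R R' : Inv (rcons Y y, R) -> ipos e (rcons Y y, R) ->
  ctx (rcons Y y) :&: R = set0 -> isucc e (rcons Y y, R) (Y, R') ->
  [/\ Inv (Y, R'), R' \subset R & mu (Y, R') < mu (rcons Y y, R)].
Proof.
case=> I1 I2 I3 /andP[RL Rcl] empty hs.
have R'R : R' \subset R.
  apply: succ_sub hs; rewrite letters_rcons (setIidPr (subsetUr _ _)).
  apply/forall_inP => u uR; apply/forallP => w; apply/implyP => /andP[euw wY].
  case: (w =P y) => [wy|wny].
    subst w; have [yc edge] := I2 Y y (prefix_refl _).
    have uD := edge u y uR (scc_self e yc) euw.
    have uy : u != y.
      apply/eqP => uy; move: (subsetP RL u uR).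
      by rewrite in_setC letters_rcons in_setU1 uy eqxx.
    have : u \in ctx (rcons Y y) :&: R by rewrite inE ctx_rcons in_setD1 uy uD uR.
    by rewrite empty inE.
  move/forall_inP: Rcl => /(_ u uR) /forallP /(_ w) /implyP; apply.
  rewrite euw in_setC letters_rcons in_setU1 negb_or.
  by move: wY; rewrite in_setC => ->; rewrite andbT; apply/eqP.
have pY : forall s, prefix s Y -> prefix s (rcons Y y).
  by move=> s ps; apply: prefix_trans ps (prefix_rcons Y y).
split => //.
- split.
  + by move: I1; rewrite rcons_uniq => /andP[].
  + move=> Z z pre; have [zc edge] := I2 Z z (pY _ pre); split => // u w uR'.
    apply: edge; exact: subsetP R'R u uR'.
  + by move=> Z pre; apply: I3; apply: pY.
- rewrite /mu /= size_rcons addnS ltnS leq_add2r.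
  exact: leq_mul (subset_leq_card R'R) (leqnn _).
Qed.


Lemma step p R' : Inv p -> ipos e p -> isucc e p (sigma p, R') ->
  [/\ Inv (sigma p, R'), R' \subset p.2 & (p.2 != set0 -> mu (sigma p, R') < mu p)].
Proof.
case: p => X R I ip.
rewrite /sigma /mainmove /pushv /dsel /=.
case: pickP => [d0 d0AR|none] /=.
  have [dAR hsrc] := srcP d0AR.
  move: dAR hsrc; set d := src (ctx X) R d0 => dAR hsrc.
  have dA : d \in ctx X by case/setIP: dAR.
  have dR : d \in R by case/setIP: dAR.
  have [xD _] := bestvP (scc_self e dA).
  have V : valid X (rcons X (bestv (scc_in e (ctx X) d) d)).
    apply: valid_push; apply/negP => /ctx_disj/negP; apply.
    exact: (subsetP (scc_sub e _ d) _ xD).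
  rewrite V => hs.
  have hsrc' : forall u w, u \in R -> u \in ctx X -> w \in scc_in e (ctx X) d -> e u w ->
     u \in scc_in e (ctx X) d.
    by move=> u w uR uA; apply: hsrc; rewrite inE uA uR.
  by case: (push_step I ip dA hsrc' (fun _ => dR) hs).
case/lastP: X I ip none => [|Y y] I ip none /=.
  have R0 : R = set0.
    apply/setP => u; move: (none u); rewrite inE in_setT /= => ->; by rewrite inE.
  have dA : t0 \in ctx [::] by rewrite in_setT.
  have V : valid [::] (rcons [::] (bestv (scc_in e (ctx [::]) t0) t0)).
    by apply: valid_push; rewrite letters_nil inE.
  rewrite V => hs.
  have hsrc' : forall u w, u \in R -> u \in ctx [::] -> w \in scc_in e (ctx [::]) t0 -> e u w ->
     u \in scc_in e (ctx [::]) t0.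
    by move=> u w; rewrite R0 inE.
  have hdR : R != set0 -> t0 \in R by rewrite R0 eqxx.
  by case: (push_step I ip dA hsrc' hdR hs).
have -> : (rcons Y y == [::]) = false by case: Y {I ip none}.
rewrite size_rcons /= take_rcons_size.
have yY : y \notin Y by case: I; rewrite /= rcons_uniq => /andP[].
rewrite valid_pop // => hs.
have empty : ctx (rcons Y y) :&: R = set0.
  by apply/setP => u; rewrite (none u) inE.
case: (pop_step I ip empty hs) => I' sub lt; split => //.
Qed.

End S.

Unset Implicit Arguments.
Set Strict Implicit.

Theorem lemma3 (T : finType) (e : rel T) (e_irr : irreflexive e)
  (T_nonempty : 0 < #|T|) :
  lifo_mi_le e (cycle_rank e).+1.
Proof.
case/card_gt0P: T_nonempty => t0 _.
exists (sigma e t0); split.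
  move=> p _; exists set0.
  case/andP: (sigma_valid e t0 p) => pf sd.
  apply/and4P; split => //.
    apply/andP; split; first exact: sub0set.
    by apply/forall_inP => x; rewrite inE.
  by apply/forall_inP => x; rewrite inE.
move=> s N s0 [ip su] comp cons.
have range_pred : forall i, in_range N i.+1 -> in_range N i.
  by case: N {comp cons ip su} => //= n i; exact: ltnW.
have eqs : forall i, in_range N i.+1 -> s i.+1 = (sigma e t0 (s i), (s i.+1).2).
  by move=> i hi; rewrite -(cons i hi); case: (s i.+1).
have inv : forall i, in_range N i -> Inv e (s i).
  elim=> [|i IH] hi.
    rewrite s0 /start; split => //=.
      by move=> Y y; case: Y.
    case=> // _ /=.
    by rewrite addn0 /fval /cycle_rank -addn1 leq_add2l; case: (_ != _).
  have hi' := range_pred i hi.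
  have hs := su i hi; rewrite (eqs i hi) in hs *.
  by case: (step (IH hi') (ip i hi') hs).
have stp : forall i, in_range N i.+1 ->
    (s i.+1).2 \subset (s i).2 /\ ((s i).2 != set0 -> mu (s i.+1) < mu (s i)).
  move=> i hi; have hi' := range_pred i hi.
  have hs := su i hi; rewrite (eqs i hi) in hs *.
  by case: (step (inv i hi') (ip i hi') hs).
split.
- case: N comp inv stp {range_pred eqs cons ip su} => [n|] comp inv stp.
    by case: comp => // -[n' h1 h2]; exists n'.
  set M := mu (s 0).
  case: (boolP [exists i : 'I_(M.+2), (s i).2 == set0]) => [/existsP[i /eqP h]|/existsPn no].
    by exists i.
  have bnd : forall i, i < M.+2 -> mu (s i) + i <= M.
    elim=> [|i IH] hi; first by rewrite addn0.
    have hi' : i < M.+2 := ltnW hi.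
    have := no (Ordinal hi'); rewrite /= => ne.
    have [_ lt] := stp i isT.
    have := IH hi'; move: (lt ne) => lt' h.
    rewrite addnS; apply: leq_trans h; by rewrite -addSn leq_add2r.
  have := bnd M.+1 (ltnSn _) => h.
  by have := leq_trans (leq_addl _ _) h; rewrite ltnn.
- by move=> i hi; case: (stp i hi).
- move=> i hi; have [_ _ I3] := inv i hi.
  apply: leq_trans (I3 _ (prefix_refl _)); exact: leq_addl.
Qed.
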